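(* Let $0<q<1$ and let $a,b,u,v,z_1,z_2\in\mathbb C$ with $|uz_1|<1$, $|vz_2|<1$, and $az_1q^k\neq1$, $bz_2q^k\ne1$ for all $k\in\mathbb N_0$. Then $$\sum_{m,n=0}^\infty H_{m,n}(z_1,z_2|q)\,\frac{\prod_{i=0}^{m-1}(u-aq^i)\,\prod_{i=0}^{n-1}(v-bq^i)}{(q;q)_m(q;q)_n} =\frac{(az_1,bz_2;q)_\infty}{(uz_1,vz_2;q)_\infty}\sum_{k=0}^\infty\frac{\prod_{i=0}^{k-1}(u-aq^i)(v-bq^i)}{(q,az_1,bz_2;q)_k}(-1)^kq^{\binom k2}.$$ (In basic hypergeometric notation, the left side is $\sum H_{m,n}\frac{u^m(a/u;q)_m v^n(b/v;q)_n}{(q;q)_m(q;q)_n}$ and the right side is $\frac{(az_1,bz_2;q)_\infty}{(uz_1,vz_2;q)_\infty}\,{}_2\phi_2(a/u,b/v;az_1,bz_2;q,uv)$.)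
   Context: $(a;q)_n=\prod_{j=0}^{n-1}(1-aq^j)$, $(a;q)_\infty=\prod_{j\ge0}(1-aq^j)$, $(a_1,\dots,a_r;q)_n=\prod_i(a_i;q)_n$, $\left[{m\atop k}\right]_q=\frac{(q;q)_m}{(q;q)_k(q;q)_{m-k}}$, $m\wedge n=\min\{m,n\}$. The first $q$-$2D$-Hermite polynomials are $$H_{m,n}(z_1,z_2|q)=\sum_{k=0}^{m\wedge n}\left[{m\atop k}\right]_q\left[{n\atop k}\right]_q(-1)^kq^{\binom k2}(q;q)_k\,z_1^{m-k}z_2^{n-k}.$$ *)

(* Defs.v *)
From Stdlib Require Import Reals Lra.
Open Scope R_scope.

Definition Cx := (R * R)%type.
Definition RtoC (r : R) : Cx := (r, 0).
Definition Czero : Cx := (0, 0).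
Definition Cone : Cx := (1, 0).
Definition Cadd (x y : Cx) : Cx := (fst x + fst y, snd x + snd y).
Definition Copp (x : Cx) : Cx := (- fst x, - snd x).
Definition Csub (x y : Cx) : Cx := Cadd x (Copp y).
Definition Cmul (x y : Cx) : Cx :=
  (fst x * fst y - snd x * snd y, fst x * snd y + snd x * fst y).
Definition Cinv (x : Cx) : Cx :=
  (fst x / (fst x ^ 2 + snd x ^ 2), - snd x / (fst x ^ 2 + snd x ^ 2)).
Definition Cdiv (x y : Cx) : Cx := Cmul x (Cinv y).
Definition Cmod (x : Cx) : R := sqrt (fst x ^ 2 + snd x ^ 2).
Fixpoint Cpow (x : Cx) (n : nat) : Cx :=
  match n with O => Cone | S n' => Cmul x (Cpow x n') end.

Fixpoint Csum (f : nat -> Cx) (n : nat) : Cx :=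
  match n with O => Czero | S n' => Cadd (Csum f n') (f n') end.
Fixpoint Cprod (f : nat -> Cx) (n : nat) : Cx :=
  match n with O => Cone | S n' => Cmul (Cprod f n') (f n') end.

Definition Cseq_cv (s : nat -> Cx) (l : Cx) : Prop :=
  forall eps : R, eps > 0 ->
    exists N : nat, forall n : nat, (n >= N)%nat -> Cmod (Csub (s n) l) < eps.
Definition Cseries_cv (f : nat -> Cx) (l : Cx) : Prop :=
  Cseq_cv (fun N => Csum f N) l.

Definition qpoch (a : Cx) (q : R) (n : nat) : Cx :=
  Cprod (fun j => Csub Cone (Cmul a (RtoC (q ^ j)))) n.

Definition qbinom (q : R) (m k : nat) : Cx :=
  Cdiv (qpoch (RtoC q) q m) (Cmul (qpoch (RtoC q) q k) (qpoch (RtoC q) q (m - k))).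

Definition binom2 (k : nat) : nat := Nat.div (k * (k - 1)) 2.

Definition Hq (m n : nat) (z1 z2 : Cx) (q : R) : Cx :=
  Csum (fun k =>
    Cmul (Cmul (Cmul (Cmul (Cmul (qbinom q m k) (qbinom q n k))
                             (Cpow (RtoC (-1)) k))
                       (RtoC (q ^ binom2 k)))
                 (qpoch (RtoC q) q k))
         (Cmul (Cpow z1 (m - k)) (Cpow z2 (n - k))))
    (S (Nat.min m n)).

(* Main.v *)
Require Import Defs.
From Stdlib Require Import Reals Lra Lia ClassicalEpsilon Field.
From Coquelicot Require Coquelicot.
Open Scope R_scope.


Module W.
Import Coquelicot.Coquelicot.

Ltac cring := ring.
Ltac cfield := field.
Fixpoint csum (f : nat -> C) (n : nat) : C :=
  match n with O => RtoC 0 | S n' => (csum f n' + f n')%C end.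
Fixpoint cprod (f : nat -> C) (n : nat) : C :=
  match n with O => RtoC 1 | S n' => (cprod f n' * f n')%C end.
Lemma Csum_csum f n : Csum f n = csum f n.
Proof. induction n; simpl; [reflexivity|]. rewrite IHn. reflexivity. Qed.
Lemma Cprod_cprod f n : Cprod f n = cprod f n.
Proof. induction n; simpl; [reflexivity|]. rewrite IHn. reflexivity. Qed.

Fixpoint Rsum (t : nat -> R) (n : nat) : R :=
  match n with O => 0 | S n' => Rsum t n' + t n' end.

Definition cv (s : nat -> C) (l : C) : Prop :=
  forall eps, 0 < eps -> exists N, forall n, (N <= n)%nat -> Cmod (s n - l)%C < eps.

Lemma cv_iff s l : Cseq_cv s l <-> cv s l.
Proof. split; intros H eps He; destruct (H eps He) as [N HN]; exists N; exact HN. Qed.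

Lemma Cmod_sub_sym (x y : C) : Cmod (x - y) = Cmod (y - x).
Proof. rewrite <- Cmod_opp. f_equal. ring. Qed.

Lemma Cmod_tri3 (x y z : C) : Cmod (x - z) <= Cmod (x - y) + Cmod (y - z).
Proof. replace (x - z)%C with ((x - y) + (y - z))%C by ring. apply Cmod_triangle. Qed.

Lemma Cmod_sub_le (x y : C) : Cmod (x - y) <= Cmod x + Cmod y.
Proof. eapply Rle_trans. apply Cmod_triangle. rewrite Cmod_opp. lra. Qed.

Lemma Cmod_fst_snd (x : C) : Cmod x <= Rabs (fst x) + Rabs (snd x).
Proof.
  destruct x as [a b].
  replace (a, b) with (RtoC a + RtoC b * Ci)%C.
  2:{ unfold RtoC, Ci, Cplus, Cmult; simpl; f_equal; ring. }
  eapply Rle_trans. apply Cmod_triangle. rewrite Cmod_mult, Cmod_Ci, !Cmod_R.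
  simpl fst; simpl snd. replace (a + (b * 0 - 0 * 1)) with a by ring.
  replace (0 + (b * 1 + 0 * 0)) with b by ring. lra.
Qed.

Lemma fst_le_Cmod (x : C) : Rabs (fst x) <= Cmod x.
Proof. pose proof (Rmax_Cmod x). pose proof (Rmax_l (Rabs (fst x)) (Rabs (snd x))). lra. Qed.
Lemma snd_le_Cmod (x : C) : Rabs (snd x) <= Cmod x.
Proof. pose proof (Rmax_Cmod x). pose proof (Rmax_r (Rabs (fst x)) (Rabs (snd x))). lra. Qed.

Lemma cv_unique s l1 l2 : cv s l1 -> cv s l2 -> l1 = l2.
Proof.
  intros H1 H2.
  assert (Hz : Cmod (l1 - l2) = 0).
  { destruct (Rle_lt_or_eq_dec 0 (Cmod (l1 - l2)) (Cmod_ge_0 _)) as [Hp|Hp]; [|auto].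
    exfalso. set (e := Cmod (l1 - l2)) in *.
    destruct (H1 (e/2)) as [N1 HN1]; [lra|].
    destruct (H2 (e/2)) as [N2 HN2]; [lra|].
    specialize (HN1 (N1 + N2)%nat ltac:(lia)). specialize (HN2 (N1 + N2)%nat ltac:(lia)).
    pose proof (Cmod_tri3 l1 (s (N1+N2)%nat) l2).
    rewrite (Cmod_sub_sym l1 (s _)) in H. fold e in H. lra. }
  apply Cmod_eq_0 in Hz. replace l1 with ((l1 - l2) + l2)%C by ring. rewrite Hz. ring.
Qed.

Lemma cv_const c : cv (fun _ => c) c.
Proof. intros eps He. exists O. intros n _. replace (c - c)%C with (RtoC 0) by ring. rewrite Cmod_0. lra. Qed.

Lemma cv_ext s t l : (forall n, s n = t n) -> cv s l -> cv t l.
Proof. intros E H eps He. destruct (H eps He) as [N HN]. exists N. intros n Hn. rewrite <- E. auto. Qed.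

Lemma cv_ext_ev s t l N0 : (forall n, (N0 <= n)%nat -> s n = t n) -> cv s l -> cv t l.
Proof. intros E H eps He. destruct (H eps He) as [N HN]. exists (N + N0)%nat. intros n Hn.
  rewrite <- E by lia. apply HN. lia. Qed.

Lemma cv_plus s t a b : cv s a -> cv t b -> cv (fun n => s n + t n)%C (a + b)%C.
Proof.
  intros H1 H2 eps He.
  destruct (H1 (eps/2)) as [N1 HN1]; [lra|]. destruct (H2 (eps/2)) as [N2 HN2]; [lra|].
  exists (N1 + N2)%nat. intros n Hn.
  replace (s n + t n - (a + b))%C with ((s n - a) + (t n - b))%C by ring.
  eapply Rle_lt_trans. apply Cmod_triangle.
  specialize (HN1 n ltac:(lia)). specialize (HN2 n ltac:(lia)). lra.
Qed.

Lemma cv_scal c s a : cv s a -> cv (fun n => c * s n)%C (c * a)%C.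
Proof.
  intros H eps He.
  destruct (H (eps / (Cmod c + 1))) as [N HN].
  { apply Rdiv_lt_0_compat; auto. pose proof (Cmod_ge_0 c). lra. }
  exists N. intros n Hn.
  replace (c * s n - c * a)%C with (c * (s n - a))%C by ring.
  rewrite Cmod_mult. specialize (HN n Hn).
  pose proof (Cmod_ge_0 c). pose proof (Cmod_ge_0 (s n - a)).
  apply Rmult_lt_compat_r with (r := Cmod c + 1) in HN; [|lra].
  unfold Rdiv in HN. rewrite Rmult_assoc, Rinv_l in HN by lra.
  nra.
Qed.

Lemma cv_opp s a : cv s a -> cv (fun n => - s n)%C (- a)%C.
Proof.
  intros H. apply cv_ext with (fun n => (-1) * s n)%C. intros; ring.
  replace (- a)%C with ((-1) * a)%C by ring. apply cv_scal; auto.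
Qed.

Lemma cv_minus s t a b : cv s a -> cv t b -> cv (fun n => s n - t n)%C (a - b)%C.
Proof. intros. apply cv_plus; auto. apply cv_opp; auto. Qed.

Lemma cv_bound_ev s a : cv s a -> exists N, forall n, (N <= n)%nat -> Cmod (s n) <= Cmod a + 1.
Proof.
  intros H. destruct (H 1) as [N HN]; [lra|]. exists N. intros n Hn.
  specialize (HN n Hn). replace (s n) with ((s n - a) + a)%C by ring.
  eapply Rle_trans. apply Cmod_triangle. lra.
Qed.

Lemma cv_mult s t a b : cv s a -> cv t b -> cv (fun n => s n * t n)%C (a * b)%C.
Proof.
  intros H1 H2.
  destruct (cv_bound_ev s a H1) as [N0 HN0].
  assert (H3 : cv (fun n => s n * (t n - b))%C 0).
  { intros eps He. set (M := Cmod a + 1). assert (HM : 0 < M) by (pose proof (Cmod_ge_0 a); unfold M; lra).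
    destruct (H2 (eps / M)) as [N HN]. apply Rdiv_lt_0_compat; auto.
    exists (N + N0)%nat. intros n Hn. replace (s n * (t n - b) - 0)%C with (s n * (t n - b))%C by ring.
    rewrite Cmod_mult. specialize (HN n ltac:(lia)). specialize (HN0 n ltac:(lia)).
    pose proof (Cmod_ge_0 (s n)). pose proof (Cmod_ge_0 (t n - b)).
    apply Rle_lt_trans with (M * Cmod (t n - b)). apply Rmult_le_compat_r; auto.
    apply Rmult_lt_compat_l with (r := M) in HN; auto. unfold Rdiv in HN.
    rewrite <- Rmult_assoc, (Rmult_comm M eps), Rmult_assoc, Rinv_r in HN by lra. lra. }
  assert (H4 := cv_plus _ _ _ _ H3 (cv_scal b s a H1)).
  eapply cv_ext; [|replace (a * b)%C with (0 + b * a)%C by ring; exact H4].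
  intros n; simpl; ring.
Qed.

Lemma cv_le s a l B N : cv s l -> (forall n, (N <= n)%nat -> Cmod (s n - a) <= B) -> Cmod (l - a) <= B.
Proof.
  intros H Hb. apply Rnot_lt_le. intros Hc.
  destruct (H (Cmod (l - a) - B)) as [N1 HN1]; [lra|].
  specialize (HN1 (N + N1)%nat ltac:(lia)). specialize (Hb (N + N1)%nat ltac:(lia)).
  pose proof (Cmod_tri3 l (s (N+N1)%nat) a). rewrite (Cmod_sub_sym l (s _)) in H0. lra.
Qed.

Lemma cv_shift s l k : cv (fun n => s (k + n)%nat) l -> cv s l.
Proof. intros H eps He. destruct (H eps He) as [N HN]. exists (k + N)%nat. intros n Hn.
  replace n with (k + (n - k))%nat by lia. apply HN. lia. Qed.

Lemma cv_shift' s l k : cv s l -> cv (fun n => s (k + n)%nat) l.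
Proof. intros H eps He. destruct (H eps He) as [N HN]. exists N. intros n Hn. apply HN. lia. Qed.

End W.

Module W2.
Import Coquelicot.Coquelicot.
Import W.

Lemma csum_0 f : csum f 0 = RtoC 0. Proof. reflexivity. Qed.
Lemma csum_S f n : csum f (S n) = (csum f n + f n)%C. Proof. reflexivity. Qed.
Lemma cprod_0 f : cprod f 0 = RtoC 1. Proof. reflexivity. Qed.
Lemma cprod_S f n : cprod f (S n) = (cprod f n * f n)%C. Proof. reflexivity. Qed.

Lemma csum_ext f g n : (forall i, (i < n)%nat -> f i = g i) -> csum f n = csum g n.
Proof. induction n; intros H; rewrite ?csum_0, ?csum_S; auto.
  rewrite IHn by (intros; apply H; lia). rewrite H by lia. auto. Qed.
Lemma cprod_ext f g n : (forall i, (i < n)%nat -> f i = g i) -> cprod f n = cprod g n.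
Proof. induction n; intros H; rewrite ?cprod_0, ?cprod_S; auto.
  rewrite IHn by (intros; apply H; lia). rewrite H by lia. auto. Qed.

Lemma csum_split f K n : csum f (K + n) = (csum f K + csum (fun i => f (K + i)%nat) n)%C.
Proof. induction n. rewrite Nat.add_0_r, csum_0. cring.
  rewrite Nat.add_succ_r, !csum_S, IHn. cring. Qed.
Lemma cprod_split f K n : cprod f (K + n) = (cprod f K * cprod (fun i => f (K + i)%nat) n)%C.
Proof. induction n. rewrite Nat.add_0_r, cprod_0. cring.
  rewrite Nat.add_succ_r, !cprod_S, IHn. cring. Qed.

Lemma csum_plus f g n : csum (fun i => f i + g i)%C n = (csum f n + csum g n)%C.
Proof. induction n; rewrite ?csum_0, ?csum_S. cring. rewrite IHn. cring. Qed.
Lemma csum_scal c f n : csum (fun i => c * f i)%C n = (c * csum f n)%C.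
Proof. induction n; rewrite ?csum_0, ?csum_S. cring. rewrite IHn. cring. Qed.
Lemma csum_zero f n : (forall i, (i < n)%nat -> f i = RtoC 0) -> csum f n = RtoC 0.
Proof. induction n; intros H; rewrite ?csum_0, ?csum_S; auto. rewrite IHn, H by (intros; auto; apply H; lia). cring. Qed.
Lemma cprod_mult f g n : cprod (fun i => f i * g i)%C n = (cprod f n * cprod g n)%C.
Proof. induction n; rewrite ?cprod_0, ?cprod_S. cring. rewrite IHn. cring. Qed.

Lemma Rsum_nonneg t n : (forall i, 0 <= t i) -> 0 <= Rsum t n.
Proof. intros H; induction n; simpl. lra. pose proof (H n). lra. Qed.
Lemma Rsum_mono t n m : (forall i, 0 <= t i) -> (n <= m)%nat -> Rsum t n <= Rsum t m.
Proof. intros H Hnm. induction Hnm. lra. simpl. pose proof (H m). lra. Qed.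
Lemma Rsum_le t s n : (forall i, t i <= s i) -> Rsum t n <= Rsum s n.
Proof. intros H; induction n; simpl. lra. pose proof (H n). lra. Qed.
Lemma Rsum_split t K n : Rsum t (K + n) = Rsum t K + Rsum (fun i => t (K + i)%nat) n.
Proof. induction n. rewrite Nat.add_0_r. simpl. cring. rewrite Nat.add_succ_r. simpl. rewrite IHn. cring. Qed.
Lemma Rsum_scal c t n : Rsum (fun i => c * t i) n = c * Rsum t n.
Proof. induction n; simpl. cring. rewrite IHn. cring. Qed.

Lemma Cmod_csum f n : Cmod (csum f n) <= Rsum (fun i => Cmod (f i)) n.
Proof. induction n. rewrite csum_0, Cmod_0. simpl; lra.
  rewrite csum_S. simpl Rsum. eapply Rle_trans. apply Cmod_triangle. lra. Qed.

Lemma csum_diff f t n m : (forall i, Cmod (f i) <= t i) -> (n <= m)%nat ->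
  Cmod (csum f m - csum f n) <= Rsum t m - Rsum t n.
Proof.
  intros H Hnm. replace m with (n + (m - n))%nat by lia.
  rewrite csum_split, Rsum_split.
  replace (csum f n + csum (fun i => f (n + i)%nat) (m - n) - csum f n)%C
    with (csum (fun i => f (n + i)%nat) (m - n)) by cring.
  eapply Rle_trans. apply Cmod_csum.
  replace (Rsum t n + Rsum (fun i => t (n + i)%nat) (m - n) - Rsum t n)
    with (Rsum (fun i => t (n + i)%nat) (m - n)) by cring.
  apply Rsum_le. intros; apply H.
Qed.

Lemma Rsum_growing t : (forall i, 0 <= t i) -> Un_growing (Rsum t).
Proof. intros H n. simpl. pose proof (H n). lra. Qed.

Lemma fst_sub_le (x y : C) : Rabs (fst x - fst y) <= Cmod (x - y).
Proof. replace (fst x - fst y) with (fst (x - y)%C) by (simpl; ring). apply fst_le_Cmod. Qed.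
Lemma snd_sub_le (x y : C) : Rabs (snd x - snd y) <= Cmod (x - y).
Proof. replace (snd x - snd y) with (snd (x - y)%C) by (simpl; ring). apply snd_le_Cmod. Qed.

Lemma abs_conv f t T : (forall n, Cmod (f n) <= t n) -> Un_cv (Rsum t) T ->
  exists l, cv (csum f) l /\ Cmod l <= T.
Proof.
  intros Hf HT.
  assert (Ht : forall i, 0 <= t i) by (intros i; eapply Rle_trans; [apply Cmod_ge_0|apply Hf]).
  assert (HC : Cauchy_crit (Rsum t)) by (apply CV_Cauchy; exists T; auto).
  assert (Hkey : forall eps, eps > 0 -> exists N, forall n m, (n >= N)%nat -> (m >= N)%nat ->
            Cmod (csum f m - csum f n) < eps).
  { intros eps He. destruct (HC eps He) as [N HN]. exists N. intros n m Hn Hm.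
    destruct (Compare_dec.le_lt_dec n m) as [Hnm|Hnm].
    - eapply Rle_lt_trans. apply csum_diff; eauto. specialize (HN m n Hm Hn).
      unfold Rdist in HN. pose proof (Rsum_mono t n m Ht Hnm). rewrite Rabs_right in HN; lra.
    - rewrite Cmod_sub_sym. eapply Rle_lt_trans. apply csum_diff; eauto. lia. specialize (HN n m Hn Hm).
      unfold Rdist in HN. pose proof (Rsum_mono t m n Ht ltac:(lia)). rewrite Rabs_right in HN; lra. }
  assert (C1 : Cauchy_crit (fun n => fst (csum f n))).
  { intros eps He. destruct (Hkey eps He) as [N HN]. exists N. intros n m Hn Hm.
    unfold Rdist. eapply Rle_lt_trans. apply fst_sub_le. rewrite Cmod_sub_sym. apply HN; auto. }
  assert (C2 : Cauchy_crit (fun n => snd (csum f n))).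
  { intros eps He. destruct (Hkey eps He) as [N HN]. exists N. intros n m Hn Hm.
    unfold Rdist. eapply Rle_lt_trans. apply snd_sub_le. rewrite Cmod_sub_sym. apply HN; auto. }
  destruct (Rcomplete.R_complete _ C1) as [l1 Hl1]. destruct (Rcomplete.R_complete _ C2) as [l2 Hl2].
  assert (Hcv : cv (csum f) (l1, l2)).
  { intros eps He. destruct (Hl1 (eps/2)) as [N1 HN1]; [lra|]. destruct (Hl2 (eps/2)) as [N2 HN2]; [lra|].
    exists (N1 + N2)%nat. intros n Hn. eapply Rle_lt_trans. apply Cmod_fst_snd.
    specialize (HN1 n ltac:(lia)). specialize (HN2 n ltac:(lia)). unfold Rdist in *.
    simpl fst; simpl snd. replace (fst (csum f n) + - l1) with (fst (csum f n) - l1) by cring.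
    replace (snd (csum f n) + - l2) with (snd (csum f n) - l2) by cring. lra. }
  exists (l1, l2). split; auto.
  replace (Cmod (l1, l2)) with (Cmod ((l1, l2) - 0)%C) by (f_equal; ring).
  apply (cv_le _ _ _ _ O Hcv). intros n _. replace (csum f n - 0)%C with (csum f n) by cring.
  eapply Rle_trans. apply Cmod_csum. eapply Rle_trans. apply Rsum_le. exact Hf.
  apply growing_ineq; auto. apply Rsum_growing; auto.
Qed.

Lemma geom_sum r n : Rsum (fun i => r ^ i) n * (1 - r) = 1 - r ^ n.
Proof. induction n; simpl. cring. rewrite Rmult_plus_distr_r, IHn. cring. Qed.

Lemma ratio_conv t r J : (forall n, 0 <= t n) -> 0 <= r < 1 ->
  (forall n, (J <= n)%nat -> t (S n) <= r * t n) -> exists T, Un_cv (Rsum t) T.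
Proof.
  intros Ht Hr Hrat.
  assert (H1 : forall n, t (J + n)%nat <= r ^ n * t J).
  { induction n. rewrite Nat.add_0_r. simpl. lra.
    rewrite Nat.add_succ_r. eapply Rle_trans. apply Hrat. lia. simpl.
    pose proof (Ht (J+n)%nat). apply Rle_trans with (r * (r ^ n * t J)). apply Rmult_le_compat_l; lra. lra. }
  assert (H2 : forall n, Rsum t n <= Rsum t J + t J / (1 - r)).
  { intros n. apply Rle_trans with (Rsum t (J + n)). apply Rsum_mono; auto; lia.
    rewrite Rsum_split. apply Rplus_le_compat_l.
    apply Rle_trans with (Rsum (fun i => t J * r ^ i) n). apply Rsum_le. intros i. rewrite Rmult_comm. apply H1.
    rewrite (Rsum_scal (t J) (fun i => r ^ i)). pose proof (geom_sum r n).
    assert (Hp : Rsum (fun i => r ^ i) n = (1 - r ^ n) / (1 - r)).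
    { field_simplify_eq; [|lra]. lra. }
    rewrite Hp. pose proof (pow_le r n ltac:(lra)). pose proof (Ht J).
    unfold Rdiv. rewrite <- Rmult_assoc. apply Rmult_le_compat_r.
    apply Rlt_le, Rinv_0_lt_compat; lra. nra. }
  destruct (growing_cv (Rsum t)) as [T HT]. apply Rsum_growing; auto.
  exists (Rsum t J + t J / (1 - r)). intros x [i ->]. apply H2.
  exists T; auto.
Qed.

Lemma finite_unif (h : nat -> nat -> C) (g : nat -> C) K :
  (forall k, (k < K)%nat -> cv (fun M => h M k) (g k)) ->
  forall eps, 0 < eps -> exists N, forall M k, (N <= M)%nat -> (k < K)%nat -> Cmod (h M k - g k) < eps.
Proof.
  induction K; intros H eps He.
  - exists O. intros; lia.
  - destruct (IHK (fun k Hk => H k ltac:(lia)) eps He) as [N1 HN1].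
    destruct (H K ltac:(lia) eps He) as [N2 HN2].
    exists (N1 + N2)%nat. intros M k HM Hk.
    destruct (Nat.eq_dec k K) as [->|Hne]. apply HN2; lia. apply HN1; lia.
Qed.

Lemma tannery (h : nat -> nat -> C) (g : nat -> C) (D : nat -> R) DT :
  (forall k, cv (fun M => h M k) (g k)) -> (forall M k, Cmod (h M k) <= D k) ->
  Un_cv (Rsum D) DT ->
  exists L, cv (csum g) L /\ cv (fun M => csum (h M) M) L.
Proof.
  intros Hcv Hb HD.
  assert (HD0 : forall k, 0 <= D k) by (intros k; eapply Rle_trans; [apply Cmod_ge_0|apply (Hb O k)]).
  assert (Hg : forall k, Cmod (g k) <= D k).
  { intros k. replace (g k) with (g k - 0)%C by cring. apply (cv_le _ _ _ _ O (Hcv k)).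
    intros n _. replace (h n k - 0)%C with (h n k) by cring. auto. }
  destruct (abs_conv g D DT Hg HD) as [L [HL _]].
  exists L. split; auto.
  assert (Hle : forall n, Rsum D n <= DT) by (apply growing_ineq; auto; apply Rsum_growing; auto).
  intros eps He.
  destruct (HD (eps/4)) as [K HK]; [lra|].
  specialize (HK K ltac:(lia)). unfold Rdist in HK. rewrite Rabs_left1 in HK by (specialize (Hle K); lra).
  destruct (finite_unif h g K (fun k _ => Hcv k) (eps / (4 * (INR K + 1)))) as [N1 HN1].
  { apply Rdiv_lt_0_compat. lra. pose proof (pos_INR K). lra. }
  destruct (HL (eps/4)) as [N2 HN2]; [lra|].
  exists (K + N1 + N2)%nat. intros M HM.
  specialize (HN2 M ltac:(lia)).
  replace M with (K + (M - K))%nat by lia.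
  set (n := (M - K)%nat).
  replace (csum (h (K + n)%nat) (K + n) - L)%C with
    ((csum (fun k => h (K + n)%nat k - g k)%C K +
      csum (fun i => h (K + n)%nat (K + i)%nat - g (K + i)%nat)%C n) + (csum g (K + n) - L))%C.
  2:{ rewrite !csum_split. unfold Cminus. rewrite !csum_plus.
      assert (E : forall m (f : nat -> C), csum (fun i => - f i)%C m = (- csum f m)%C).
      { intros m f. induction m; rewrite ?csum_0, ?csum_S. cring. rewrite IHm. cring. }
      rewrite !E. cring. }
  assert (B1 : Cmod (csum (fun k => h (K + n)%nat k - g k)%C K) <= INR K * (eps / (4 * (INR K + 1)))).
  { eapply Rle_trans. apply Cmod_csum.
    assert (G : forall j, (j <= K)%nat -> Rsum (fun i => Cmod (h (K + n)%nat i - g i)) j <= INR j * (eps / (4 * (INR K + 1)))).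
    { induction j; intros Hj. simpl. lra. simpl Rsum. rewrite S_INR.
      specialize (IHj ltac:(lia)). specialize (HN1 (K + n)%nat j ltac:(lia) ltac:(lia)). lra. }
    apply G; lia. }
  assert (B1' : INR K * (eps / (4 * (INR K + 1))) <= eps / 4).
  { pose proof (pos_INR K). unfold Rdiv. rewrite Rinv_mult.
    apply Rle_trans with (eps * / 4 * (INR K * / (INR K + 1))). right; cring.
    assert (INR K * / (INR K + 1) <= 1).
    { apply Rmult_le_reg_r with (INR K + 1). lra. rewrite Rmult_assoc, Rinv_l by lra. lra. }
    assert (0 <= eps * / 4) by lra. nra. }
  assert (B2 : Cmod (csum (fun i => h (K + n)%nat (K + i)%nat - g (K + i)%nat)%C n) <= 2 * (eps / 4)).
  { eapply Rle_trans. apply Cmod_csum.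
    apply Rle_trans with (Rsum (fun i => 2 * D (K + i)%nat) n).
    { apply Rsum_le. intros i. eapply Rle_trans. apply Cmod_sub_le.
      pose proof (Hb (K + n)%nat (K + i)%nat). pose proof (Hg (K + i)%nat). lra. }
    rewrite Rsum_scal. apply Rmult_le_compat_l. lra.
    pose proof (Hle (K + n)%nat). rewrite Rsum_split in H. lra. }
  eapply Rle_lt_trans. apply Cmod_triangle.
  eapply Rle_lt_trans. apply Rplus_le_compat_r. apply Cmod_triangle.
  replace (csum g (K + n)) with (csum g M) by (f_equal; unfold n; lia). lra.
Qed.

End W2.

Module W3.
Import Coquelicot.Coquelicot.
Import W W2.

Lemma RtoC_mul (a b : R) : RtoC (a * b) = (RtoC a * RtoC b)%C.
Proof. unfold RtoC, Cmult; simpl; f_equal; ring. Qed.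
Lemma RtoC_sub (a b : R) : RtoC (a - b) = (RtoC a - RtoC b)%C.
Proof. unfold RtoC, Cminus, Cplus, Copp; simpl; f_equal; ring. Qed.

Lemma cprod_nz f n : (forall i, (i < n)%nat -> f i <> RtoC 0) -> cprod f n <> RtoC 0.
Proof.
  induction n; intros H; simpl.
  - intro E. apply RtoC_inj in E. lra.
  - apply Cmult_neq_0. apply IHn; intros; apply H; lia. apply H; lia.
Qed.

Lemma cv_div1 s g L : (forall n, (s n * g n)%C = L) -> cv g (RtoC 1) -> cv s L.
Proof.
  intros Hs Hg eps He.
  set (M := 2 * Cmod L + 1).
  assert (HM : 0 < M) by (pose proof (Cmod_ge_0 L); unfold M; lra).
  destruct (Hg (Rmin (1/2) (eps / M))) as [N HN].
  { apply Rmin_pos. lra. apply Rdiv_lt_0_compat; auto. }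
  exists N. intros n Hn. specialize (HN n Hn).
  pose proof (Rmin_l (1/2) (eps/M)). pose proof (Rmin_r (1/2) (eps/M)).
  assert (Hg1 : 1/2 <= Cmod (g n)).
  { pose proof (Cmod_tri3 (RtoC 1) (g n) (RtoC 0)). rewrite Cmod_sub_sym in HN.
    replace (RtoC 1 - RtoC 0)%C with (RtoC 1) in H1 by ring.
    replace (g n - RtoC 0)%C with (g n) in H1 by ring. rewrite Cmod_1 in H1. lra. }
  assert (Hsn : Cmod (s n) <= 2 * Cmod L).
  { rewrite <- (Hs n), Cmod_mult. pose proof (Cmod_ge_0 (s n)). nra. }
  replace (s n - L)%C with (s n * (RtoC 1 - g n))%C by (rewrite <- (Hs n); ring).
  rewrite Cmod_mult, Cmod_sub_sym.
  pose proof (Cmod_ge_0 (g n - RtoC 1)). pose proof (Cmod_ge_0 (s n)).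
  apply Rle_lt_trans with (M * Cmod (g n - RtoC 1)).
  apply Rmult_le_compat_r; auto. unfold M; lra.
  apply Rlt_le_trans with (M * (eps / M)). apply Rmult_lt_compat_l; lra.
  right. field. lra.
Qed.

Section QB.
Variable q : R.
Hypothesis Hq : 0 < q < 1.

Definition pp (u c : C) (j : nat) : C := cprod (fun i => u - c * RtoC (q ^ i))%C j.
Definition qp (x : C) (j : nat) : C := cprod (fun i => RtoC 1 - x * RtoC (q ^ i))%C j.
Fixpoint rq (j : nat) : R := match j with O => 1 | S j' => rq j' * (1 - q ^ S j') end.
Definition qq (j : nat) : C := RtoC (rq j).
Definition e (u c : C) (j : nat) : C := (pp u c j / qq j)%C.
Definition term (u c z : C) (j : nat) : C := (e u c j * z ^ j)%C.
Fixpoint rp (U Cc : R) (j : nat) : R := match j with O => 1 | S j' => rp U Cc j' * (U + Cc * q ^ j') end.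
Definition tr (u c z : C) (j : nat) : R := Cmod z ^ j * rp (Cmod u) (Cmod c) j / rq j.

Lemma qpow_pos j : 0 < q ^ j. Proof. apply pow_lt; lra. Qed.
Lemma qpow_le1 j : q ^ j <= 1.
Proof. induction j; simpl. lra. pose proof (qpow_pos j). nra. Qed.
Lemma qpow_S_lt1 j : q ^ S j < 1.
Proof. simpl. pose proof (qpow_le1 j). pose proof (qpow_pos j). nra. Qed.
Lemma qpow_mono J j : (J <= j)%nat -> q ^ j <= q ^ J.
Proof. intros H. replace j with (J + (j - J))%nat by lia. rewrite pow_add.
  pose proof (qpow_le1 (j - J)). pose proof (qpow_pos J). nra. Qed.

Lemma rq_pos j : 0 < rq j.
Proof. induction j; simpl. lra. pose proof (qpow_S_lt1 j). simpl in H. nra. Qed.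
Lemma qq_nz j : qq j <> RtoC 0.
Proof. unfold qq. intro E. apply RtoC_inj in E. pose proof (rq_pos j). lra. Qed.
Lemma Cmod_qq j : Cmod (qq j) = rq j.
Proof. unfold qq. rewrite Cmod_R. apply Rabs_right. pose proof (rq_pos j). lra. Qed.
Lemma qq_S j : qq (S j) = (qq j * RtoC (1 - q ^ S j))%C.
Proof. unfold qq. simpl rq. apply RtoC_mul. Qed.
Lemma qq_qp j : qq j = qp (RtoC q) j.
Proof. induction j. reflexivity. rewrite qq_S. unfold qp. simpl cprod. fold (qp (RtoC q) j).
  rewrite <- IHj. f_equal. rewrite RtoC_sub, <- RtoC_mul. reflexivity. Qed.

Lemma rp_nonneg U Cc j : 0 <= U -> 0 <= Cc -> 0 <= rp U Cc j.
Proof. intros HU HC. induction j; simpl. lra. pose proof (qpow_pos j).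
  apply Rmult_le_pos; auto. nra. Qed.

Lemma pp_bound u c c' j : Cmod c' <= Cmod c -> Cmod (pp u c' j) <= rp (Cmod u) (Cmod c) j.
Proof.
  intros Hc. induction j.
  - unfold pp; simpl cprod. rewrite Cmod_1. simpl. lra.
  - unfold pp in *. simpl cprod. simpl rp. rewrite Cmod_mult.
    apply Rmult_le_compat; auto using Cmod_ge_0.
    eapply Rle_trans. apply Cmod_sub_le. rewrite Cmod_mult, Cmod_R, Rabs_right by (pose proof (qpow_pos j); lra).
    pose proof (qpow_pos j). nra.
Qed.

Lemma tr_nonneg u c z j : 0 <= tr u c z j.
Proof. unfold tr. apply Rmult_le_pos. apply Rmult_le_pos. apply pow_le, Cmod_ge_0.
  apply rp_nonneg; apply Cmod_ge_0. apply Rlt_le, Rinv_0_lt_compat, rq_pos. Qed.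

Lemma term_bound u c c' z j : Cmod c' <= Cmod c -> Cmod (term u c' z j) <= tr u c z j.
Proof.
  intros Hc. unfold term, e, tr. rewrite Cmod_mult, Cmod_div by apply qq_nz.
  rewrite Cmod_qq, Cmod_pow. pose proof (pp_bound u c c' j Hc). pose proof (rq_pos j).
  pose proof (pow_le (Cmod z) j (Cmod_ge_0 z)).
  unfold Rdiv. assert (0 <= / rq j) by (apply Rlt_le, Rinv_0_lt_compat; auto).
  assert (0 <= / rq j * Cmod z ^ j) by (apply Rmult_le_pos; auto). nra.
Qed.

Lemma tr_S u c z j : tr u c z (S j) = tr u c z j * (Cmod z * (Cmod u + Cmod c * q ^ j) / (1 - q ^ S j)).
Proof. unfold tr. simpl rp. simpl rq. pose proof (rq_pos j). pose proof (qpow_S_lt1 j). simpl in H0.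
  simpl pow. field. split; lra. Qed.

Lemma tr_conv u c z : Cmod u * Cmod z < 1 -> exists T, Un_cv (Rsum (tr u c z)) T.
Proof.
  intros Huz. set (r := (1 + Cmod u * Cmod z) / 2).
  pose proof (Cmod_ge_0 u). pose proof (Cmod_ge_0 z). pose proof (Cmod_ge_0 c).
  assert (Hr : 0 <= r < 1) by (unfold r; split; nra).
  set (d := r - Cmod u * Cmod z). assert (Hd : 0 < d) by (unfold d, r; lra).
  destruct (pow_lt_1_zero q ltac:(rewrite Rabs_right; lra) (d / (Cmod z * Cmod c + r + 1))) as [J HJ].
  { apply Rdiv_lt_0_compat; auto. nra. }
  apply (ratio_conv _ r J). apply tr_nonneg. auto.
  intros n Hn. rewrite tr_S. rewrite Rmult_comm. apply Rmult_le_compat_r. apply tr_nonneg.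
  specialize (HJ n Hn). rewrite Rabs_right in HJ by (pose proof (qpow_pos n); lra).
  pose proof (qpow_S_lt1 n). pose proof (qpow_pos n).
  apply Rmult_le_reg_r with (1 - q ^ S n). lra. unfold Rdiv. rewrite Rmult_assoc, Rinv_l by lra.
  simpl pow. simpl pow in H2.
  assert (q ^ n * (Cmod z * Cmod c + r + 1) < d).
  { apply Rmult_lt_compat_r with (r := Cmod z * Cmod c + r + 1) in HJ; [|nra].
    unfold Rdiv in HJ. rewrite Rmult_assoc, Rinv_l in HJ by nra. lra. }
  unfold d in H4. assert (r * (q * q ^ n) <= r * q ^ n) by (apply Rmult_le_compat_l; nra). nra.
Qed.

Lemma e0 u c : e u c 0 = RtoC 1.
Proof. unfold e, pp, qq. simpl cprod. simpl rq. field. Qed.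

Lemma e_S u c j : (e u c (S j) * (RtoC 1 - RtoC (q ^ S j)))%C = (e u c j * (u - c * RtoC (q ^ j)))%C.
Proof.
  unfold e. rewrite qq_S. unfold pp at 1. simpl cprod. fold (pp u c j).
  assert (H1 : RtoC (1 - q ^ S j) <> RtoC 0).
  { intro E. apply RtoC_inj in E. pose proof (qpow_S_lt1 j). lra. }
  rewrite <- RtoC_sub. field. split; auto. apply qq_nz.
Qed.

Definition F (u c z : C) : C := epsilon (inhabits (RtoC 0)) (fun l => cv (csum (term u c z)) l).

Lemma F_cv u c z : Cmod u * Cmod z < 1 -> cv (csum (term u c z)) (F u c z).
Proof.
  intros H. destruct (tr_conv u c z H) as [T HT].
  destruct (abs_conv (term u c z) (tr u c z) T) as [l [Hl _]]; auto.
  intros n; apply term_bound; lra.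
  unfold F. apply epsilon_spec. exists l; auto.
Qed.

Lemma F_unique u c z l : Cmod u * Cmod z < 1 -> cv (csum (term u c z)) l -> F u c z = l.
Proof. intros H Hl. eapply cv_unique. apply F_cv; auto. auto. Qed.

Lemma cpow_RtoC_mul (r : R) (z : C) n : ((RtoC r * z) ^ n)%C = (RtoC (r ^ n) * z ^ n)%C.
Proof. rewrite Cpow_mult_l, RtoC_pow. reflexivity. Qed.

Lemma FE_fin u c z N :
  (csum (term u c z) (S N) - csum (term u c (RtoC q * z)) (S N))%C =
  (u * z * csum (term u c z) N - c * z * csum (term u c (RtoC q * z)) N)%C.
Proof.
  induction N.
  - cbn [csum]. unfold term. rewrite !e0. cbn [Cpow]. ring.
  - rewrite (csum_S (term u c z) (S N)), (csum_S (term u c (RtoC q * z)) (S N)).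
    transitivity ((csum (term u c z) (S N) - csum (term u c (RtoC q * z)) (S N)) +
                  (term u c z (S N) - term u c (RtoC q * z) (S N)))%C. ring.
    rewrite IHN.
    assert (E : (term u c z (S N) - term u c (RtoC q * z) (S N))%C =
                (u * z * term u c z N - c * z * term u c (RtoC q * z) N)%C).
    { unfold term. rewrite !cpow_RtoC_mul.
      transitivity (z ^ S N * (e u c (S N) * (RtoC 1 - RtoC (q ^ S N))))%C. ring.
      rewrite e_S. rewrite Cpow_S. ring. }
    rewrite E, (csum_S (term u c z) N), (csum_S (term u c (RtoC q * z)) N). ring.
Qed.

End QB.
End W3.

Module W4.
Import Coquelicot.Coquelicot.
Import W W2 W3.

Section QB2.
Variable q : R.
Hypothesis Hq : 0 < q < 1.
Local Notation F := (F q).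
Local Notation qp := (qp q).
Local Notation term := (term q).
Local Notation tr := (tr q).

Lemma Csub0 (a b : C) : (a - b)%C = RtoC 0 -> a = b.
Proof. intros H. replace a with ((a - b) + b)%C by ring. rewrite H. ring. Qed.

Lemma pow_le1' (x : R) n : 0 <= x <= 1 -> x ^ n <= 1.
Proof. intros H. induction n; simpl. lra. nra. Qed.

Lemma Cmod_RtoC_q n : Cmod (RtoC (q ^ n)) = q ^ n.
Proof. rewrite Cmod_R. apply Rabs_right. pose proof (qpow_pos q Hq n). lra. Qed.

Lemma FE u c z : Cmod u * Cmod z < 1 ->
  ((RtoC 1 - u * z) * F u c z)%C = ((RtoC 1 - c * z) * F u c (RtoC q * z))%C.
Proof.
  intros H.
  assert (H' : Cmod u * Cmod (RtoC q * z) < 1).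
  { rewrite Cmod_mult, Cmod_R, Rabs_right by lra. pose proof (Cmod_ge_0 u). pose proof (Cmod_ge_0 z). nra. }
  pose proof (F_cv q Hq u c z H) as H1. pose proof (F_cv q Hq u c (RtoC q * z) H') as H2.
  assert (A : cv (fun n => csum (term u c z) (S n) - csum (term u c (RtoC q * z)) (S n))%C
                 (F u c z - F u c (RtoC q * z))%C).
  { apply (cv_minus _ _ _ _ (cv_shift' _ _ 1 H1) (cv_shift' _ _ 1 H2)). }
  assert (B : cv (fun n => csum (term u c z) (S n) - csum (term u c (RtoC q * z)) (S n))%C
                 (u * z * F u c z - c * z * F u c (RtoC q * z))%C).
  { eapply cv_ext. intros n. symmetry. apply (FE_fin q Hq).
    apply cv_minus; apply cv_scal; auto. }
  pose proof (cv_unique _ _ _ A B) as E.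
  apply Csub0. set (X := F u c z) in *. set (Y := F u c (RtoC q * z)) in *.
  transitivity ((X - Y) - (u * z * X - c * z * Y))%C. ring. rewrite E. ring.
Qed.

Lemma F_iter u c z N : Cmod u * Cmod z < 1 ->
  (F u c z * qp (u * z) N)%C = (qp (c * z) N * F u c (RtoC (q ^ N) * z))%C.
Proof.
  intros H. induction N.
  - unfold W3.qp. simpl cprod. replace (RtoC (q ^ 0) * z)%C with z by (simpl; ring). ring.
  - unfold W3.qp in *. simpl cprod.
    set (Q := RtoC (q ^ N)) in *.
    assert (Hw : Cmod u * Cmod (Q * z) < 1).
    { unfold Q. rewrite Cmod_mult, Cmod_RtoC_q. pose proof (qpow_le1 q Hq N). pose proof (qpow_pos q Hq N).
      pose proof (Cmod_ge_0 u). pose proof (Cmod_ge_0 z). nra. }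
    pose proof (FE u c (Q * z) Hw) as Fw.
    replace (RtoC q * (Q * z))%C with (RtoC (q ^ S N) * z)%C in Fw
      by (unfold Q; simpl pow; rewrite RtoC_mul; ring).
    transitivity ((F u c z * cprod (fun i : nat => RtoC 1 - u * z * RtoC (q ^ i)) N) * (RtoC 1 - u * (Q * z)))%C.
    ring. rewrite IHN.
    transitivity (cprod (fun i : nat => RtoC 1 - c * z * RtoC (q ^ i)) N * ((RtoC 1 - u * (Q * z)) * F u c (Q * z)))%C.
    ring. rewrite Fw. ring.
Qed.

Lemma F_lim1 u c z : Cmod u * Cmod z < 1 -> cv (fun N => F u c (RtoC (q ^ N) * z)) (RtoC 1).
Proof.
  intros H. destruct (tr_conv q Hq u c z H) as [T HT].
  assert (HTle : forall n, Rsum (tr u c z) n <= T).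
  { apply growing_ineq; auto. apply Rsum_growing. intros; apply tr_nonneg; auto. }
  assert (HT0 : 0 <= T) by (pose proof (HTle O); simpl in H0; lra).
  assert (Hb : forall N, Cmod (F u c (RtoC (q ^ N) * z) - RtoC 1) <= q ^ N * T).
  { intros N. set (w := (RtoC (q ^ N) * z)%C).
    assert (Hw : Cmod u * Cmod w < 1).
    { unfold w. rewrite Cmod_mult, Cmod_RtoC_q. pose proof (qpow_le1 q Hq N). pose proof (qpow_pos q Hq N).
      pose proof (Cmod_ge_0 u). pose proof (Cmod_ge_0 z). nra. }
    assert (Hterm : forall j, Cmod (term u c w (S j)) <= q ^ N * tr u c z (S j)).
    { intros j. unfold W3.term, w. rewrite cpow_RtoC_mul.
      replace (e q u c (S j) * (RtoC ((q ^ N) ^ S j) * z ^ S j))%C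
        with (RtoC ((q ^ N) ^ S j) * (e q u c (S j) * z ^ S j))%C by ring.
      rewrite Cmod_mult, Cmod_R, Rabs_right.
      2:{ apply Rle_ge, pow_le. pose proof (qpow_pos q Hq N). lra. }
      pose proof (term_bound q Hq u c c z (S j) (Rle_refl _)). unfold W3.term in H0.
      pose proof (qpow_pos q Hq N). pose proof (qpow_le1 q Hq N).
      assert (0 <= (q ^ N) ^ j <= 1) by (split; [apply pow_le; lra| apply pow_le1'; lra]).
      replace ((q ^ N) ^ S j) with (q ^ N * (q ^ N) ^ j) by reflexivity.
      pose proof (Cmod_ge_0 (e q u c (S j) * z ^ S j)).
      apply Rle_trans with (q ^ N * Cmod (e q u c (S j) * z ^ S j)).
      2:{ apply Rmult_le_compat_l; lra. }
      rewrite Rmult_assoc. apply Rmult_le_compat_l. lra. nra. }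
    assert (Hps : forall n, Cmod (csum (term u c w) (S n) - RtoC 1) <= q ^ N * Rsum (tr u c z) (S n)).
    { induction n.
      - cbn [csum]. unfold W3.term at 1. rewrite e0. cbn [Cpow].
        replace (RtoC 0 + RtoC 1 * RtoC 1 - RtoC 1)%C with (RtoC 0) by ring. rewrite Cmod_0.
        simpl Rsum. pose proof (tr_nonneg q Hq u c z 0). pose proof (qpow_pos q Hq N). nra.
      - rewrite csum_S.
        replace (csum (term u c w) (S n) + term u c w (S n) - RtoC 1)%C with
          ((csum (term u c w) (S n) - RtoC 1) + term u c w (S n))%C by ring.
        eapply Rle_trans. apply Cmod_triangle. specialize (Hterm n).
        replace (Rsum (tr u c z) (S (S n))) with (Rsum (tr u c z) (S n) + tr u c z (S n)) by reflexivity.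
        lra. }
    replace (F u c w - RtoC 1)%C with (F u c w - RtoC 1)%C by reflexivity.
    apply (cv_le _ _ _ _ 1%nat (F_cv q Hq u c w Hw)).
    intros n Hn. replace n with (S (n - 1)) by lia. eapply Rle_trans. apply Hps.
    apply Rmult_le_compat_l. pose proof (qpow_pos q Hq N); lra. apply HTle. }
  intros eps He.
  destruct (pow_lt_1_zero q ltac:(rewrite Rabs_right; lra) (eps / (T + 1))) as [N0 HN0].
  { apply Rdiv_lt_0_compat; lra. }
  exists N0. intros n Hn. specialize (HN0 n Hn). rewrite Rabs_right in HN0 by (pose proof (qpow_pos q Hq n); lra).
  eapply Rle_lt_trans. apply Hb. pose proof (qpow_pos q Hq n).
  apply Rle_lt_trans with (q ^ n * (T + 1)). nra.
  apply Rmult_lt_compat_r with (r := T + 1) in HN0; [|lra]. unfold Rdiv in HN0.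
  rewrite Rmult_assoc, Rinv_l in HN0 by lra. lra.
Qed.

End QB2.
End W4.

Module W5.
Import Coquelicot.Coquelicot.
Import W W2 W3 W4.

Section QB3.
Variable q : R.
Hypothesis Hq : 0 < q < 1.
Local Notation F := (F q).
Local Notation qp := (qp q).
Local Notation term := (term q).
Local Notation tr := (tr q).

Definition qinf (x : C) : C := F (RtoC 0) x (RtoC 1).

Lemma qp_zero N : qp (RtoC 0) N = RtoC 1.
Proof. unfold W3.qp. induction N; simpl cprod. reflexivity. rewrite IHN. ring. Qed.

Lemma c01 : Cmod (RtoC 0) * Cmod (RtoC 1) < 1.
Proof. rewrite Cmod_0. lra. Qed.

Lemma qinf_cv x : cv (qp x) (qinf x).
Proof.
  apply cv_div1 with (g := fun N => F (RtoC 0) x (RtoC (q ^ N) * RtoC 1)).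
  - intros n. pose proof (F_iter q Hq (RtoC 0) x (RtoC 1) n c01) as H.
    replace (RtoC 0 * RtoC 1)%C with (RtoC 0) in H by ring.
    replace (x * RtoC 1)%C with x in H by ring. rewrite qp_zero in H.
    unfold qinf. rewrite <- H. ring.
  - apply (F_lim1 q Hq). apply c01.
Qed.

Lemma qinf_QB u c z : Cmod u * Cmod z < 1 -> (F u c z * qinf (u * z))%C = qinf (c * z).
Proof.
  intros H. apply (cv_unique (fun N => F u c z * qp (u * z) N)%C).
  - apply cv_scal. apply qinf_cv.
  - eapply cv_ext. intros n. symmetry. apply (F_iter q Hq u c z n H).
    replace (qinf (c * z)) with (qinf (c * z) * RtoC 1)%C by ring.
    apply cv_mult. apply qinf_cv. apply (F_lim1 q Hq); auto.
Qed.

Lemma qinf_0 : qinf (RtoC 0) = RtoC 1.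
Proof. apply (cv_unique (qp (RtoC 0))). apply qinf_cv. apply (cv_ext (fun _ => RtoC 1)). intros n; symmetry; apply qp_zero.
  apply cv_const. Qed.

Lemma qinf_nz_small x : Cmod x < 1 -> qinf x <> RtoC 0.
Proof.
  intros Hx E.
  assert (H : Cmod x * Cmod (RtoC 1) < 1) by (rewrite Cmod_1; lra).
  pose proof (qinf_QB x (RtoC 0) (RtoC 1) H) as Q.
  replace (x * RtoC 1)%C with x in Q by ring. replace (RtoC 0 * RtoC 1)%C with (RtoC 0) in Q by ring.
  rewrite qinf_0, E in Q. assert (RtoC 0 = RtoC 1) by (rewrite <- Q; ring).
  apply RtoC_inj in H0. lra.
Qed.

Lemma qp_split x k N : qp x (k + N) = (qp x k * qp (x * RtoC (q ^ k)) N)%C.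
Proof.
  unfold W3.qp. rewrite cprod_split. f_equal. apply cprod_ext. intros i _.
  rewrite pow_add, RtoC_mul. ring.
Qed.

Lemma qinf_shift x k : qinf x = (qp x k * qinf (x * RtoC (q ^ k)))%C.
Proof.
  apply (cv_unique (fun N => qp x (k + N))).
  - apply cv_shift'. apply qinf_cv.
  - eapply cv_ext. intros n. symmetry. apply qp_split. apply cv_scal. apply qinf_cv.
Qed.

Lemma pp_scale x w j : pp q (RtoC 0) (x * w) j = (pp q (RtoC 0) x j * w ^ j)%C.
Proof. unfold pp. induction j; simpl cprod; simpl Cpow. ring. rewrite IHj. ring. Qed.

Lemma qinf_tail x : cv (fun I => qinf (x * RtoC (q ^ I))) (RtoC 1).
Proof.
  eapply cv_ext. 2: apply (F_lim1 q Hq (RtoC 0) x (RtoC 1) c01).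
  intros I. unfold qinf. symmetry. apply F_unique; auto. apply c01.
  eapply cv_ext. 2: apply (F_cv q Hq (RtoC 0) x (RtoC (q ^ I) * RtoC 1)).
  2:{ rewrite Cmod_0. lra. }
  intros n. apply csum_ext. intros j _. unfold W3.term, e. rewrite pp_scale, Cpow_1_l.
  replace (RtoC (q ^ I) * RtoC 1)%C with (RtoC (q ^ I)) by ring. unfold Cdiv. ring.
Qed.

Lemma qinf_nz x : (forall i, (RtoC 1 - x * RtoC (q ^ i))%C <> RtoC 0) -> qinf x <> RtoC 0.
Proof.
  intros Hx.
  destruct (qinf_tail x (1/2)) as [I HI]; [lra|]. specialize (HI I (le_n _)).
  rewrite (qinf_shift x I). apply Cmult_neq_0.
  - unfold W3.qp. apply cprod_nz. intros i _. apply Hx.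
  - intro E. rewrite E in HI. replace (RtoC 0 - RtoC 1)%C with (- RtoC 1)%C in HI by ring.
    rewrite Cmod_opp, Cmod_1 in HI. lra.
Qed.

Lemma QB_eval u c z : Cmod u * Cmod z < 1 -> F u c z = (qinf (c * z) / qinf (u * z))%C.
Proof.
  intros H. rewrite <- (qinf_QB u c z H). field. apply qinf_nz_small.
  rewrite Cmod_mult. auto.
Qed.

End QB3.
End W5.

Module W6.
Import Coquelicot.Coquelicot.
Import W W2 W3 W4 W5.

Lemma csum_exchange (h : nat -> nat -> C) N K :
  csum (fun n => csum (fun k => h n k) K) N = csum (fun k => csum (fun n => h n k) N) K.
Proof.
  induction N; simpl csum.
  - symmetry. apply csum_zero. intros; reflexivity.
  - rewrite IHN. rewrite <- csum_plus. reflexivity.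
Qed.

Lemma cv_csum_fin (f : nat -> nat -> C) (g : nat -> C) K :
  (forall k, cv (fun N => f N k) (g k)) -> cv (fun N => csum (f N) K) (csum g K).
Proof.
  intros H. induction K; simpl csum.
  - apply cv_const.
  - apply cv_plus; auto.
Qed.

Lemma csum_triangle (h : nat -> nat -> C) M :
  csum (fun m => csum (fun k => h k (m - k)%nat) (S m)) M = csum (fun k => csum (h k) (M - k)) M.
Proof.
  induction M.
  - reflexivity.
  - rewrite csum_S, IHM.
    rewrite (csum_ext (fun k => csum (h k) (S M - k)) (fun k => csum (h k) (M - k)%nat + h k (M - k)%nat)%C (S M)).
    2:{ intros i Hi. replace (S M - i)%nat with (S (M - i)) by lia. reflexivity. }
    rewrite csum_plus. rewrite (csum_S (fun k => csum (h k) (M - k))). rewrite Nat.sub_diag. change (csum (h M) 0) with (RtoC 0). ring.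
Qed.

Lemma Un_cv_scal c t T : Un_cv t T -> Un_cv (fun n => c * t n) (c * T).
Proof.
  intros H. apply (CV_mult (fun _ => c) t c T); auto.
  intros eps He. exists O. intros. unfold Rdist. rewrite Rminus_diag, Rabs_R0. lra.
Qed.

Lemma rcomp (D d : nat -> R) T : (forall k, 0 <= D k <= d k) -> Un_cv (Rsum d) T -> exists DT, Un_cv (Rsum D) DT.
Proof.
  intros H Hd.
  assert (Hle : forall n, Rsum d n <= T) by (apply growing_ineq; auto; apply Rsum_growing; intros k; pose proof (H k); lra).
  destruct (growing_cv (Rsum D)) as [DT HDT]. apply Rsum_growing. intros k; apply H.
  exists T. intros x [i ->]. eapply Rle_trans. apply Rsum_le. intros k. apply (H k). apply Hle.
  exists DT; auto.
Qed.

Lemma binom2_S k : binom2 (S k) = (binom2 k + k)%nat.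
Proof.
  unfold binom2. replace (S k * (S k - 1))%nat with (k * (k - 1) + k * 2)%nat.
  rewrite Nat.div_add by lia. reflexivity.
  destruct k. reflexivity. simpl. nia.
Qed.

Section Main.
Variable q : R.
Hypothesis Hq : 0 < q < 1.
Variables a b u v z1 z2 : C.
Hypothesis Huz : Cmod (u * z1) < 1.
Hypothesis Hvz : Cmod (v * z2) < 1.
Hypothesis Ha : forall k, (RtoC 1 - a * z1 * RtoC (q ^ k))%C <> RtoC 0.
Hypothesis Hb : forall k, (RtoC 1 - b * z2 * RtoC (q ^ k))%C <> RtoC 0.

Local Notation F := (F q).
Local Notation qp := (qp q).
Local Notation term := (term q).
Local Notation tr := (tr q).
Local Notation pp := (pp q).
Local Notation qq := (qq q).
Local Notation qinf := (qinf q).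

Lemma Huz' : Cmod u * Cmod z1 < 1. Proof. rewrite <- Cmod_mult; auto. Qed.
Lemma Hvz' : Cmod v * Cmod z2 < 1. Proof. rewrite <- Cmod_mult; auto. Qed.

Definition qbW (m k : nat) : C := (qp (RtoC q) m / (qp (RtoC q) k * qp (RtoC q) (m - k)))%C.
Definition hqW (m n : nat) : C :=
  csum (fun k => qbW m k * qbW n k * RtoC (-1) ^ k * RtoC (q ^ binom2 k) * qp (RtoC q) k * (z1 ^ (m - k) * z2 ^ (n - k)))%C
    (S (Nat.min m n)).
Definition termW (m n : nat) : C := (hqW m n * (pp u a m * pp v b n / (qp (RtoC q) m * qp (RtoC q) n)))%C.

Definition w (k : nat) : C := (RtoC (-1) ^ k * RtoC (q ^ binom2 k) / qq k)%C.
Definition Xm (m k : nat) : C := (w k * (z1 ^ (m - k) * pp u a m / qq (m - k)))%C.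
Definition Yf (k n : nat) : C := if (k <=? n)%nat then (z2 ^ (n - k) * pp v b n / qq (n - k))%C else RtoC 0.
Definition Fv (k : nat) : C := F v (b * RtoC (q ^ k)) z2.
Definition Fu (k : nat) : C := F u (a * RtoC (q ^ k)) z1.
Definition Tm (m : nat) : C := csum (fun k => Xm m k * (pp v b k * Fv k))%C (S m).

Lemma pp_split u0 c k l : pp u0 c (k + l) = (pp u0 c k * pp u0 (c * RtoC (q ^ k)) l)%C.
Proof. unfold W3.pp. rewrite cprod_split. f_equal. apply cprod_ext. intros i _.
  rewrite pow_add, RtoC_mul. ring. Qed.

Lemma Y_shift k l : Yf k (k + l) = (pp v b k * term v (b * RtoC (q ^ k)) z2 l)%C.
Proof.
  unfold Yf. replace (k <=? k + l)%nat with true by (symmetry; apply Nat.leb_le; lia).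
  replace (k + l - k)%nat with l by lia. rewrite pp_split. unfold W3.term, e. unfold Cdiv. ring.
Qed.

Lemma Y_cv k : cv (csum (Yf k)) (pp v b k * Fv k)%C.
Proof.
  apply (cv_shift _ _ k).
  eapply cv_ext. 2: apply cv_scal with (c := pp v b k); apply (F_cv q Hq v (b * RtoC (q ^ k)) z2 Hvz').
  intros N. rewrite csum_split. rewrite (csum_zero (Yf k) k).
  2:{ intros i Hi. unfold Yf. replace (k <=? i)%nat with false by (symmetry; apply Nat.leb_gt; lia). reflexivity. }
  rewrite <- csum_scal. rewrite (csum_ext (fun i => Yf k (k + i)) (fun i => pp v b k * term v (b * RtoC (q ^ k)) z2 i)%C).
  ring. intros i _. apply Y_shift.
Qed.

Lemma qbW_nz_den m k : (qq k * qq (m - k))%C <> RtoC 0.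
Proof. apply Cmult_neq_0; apply qq_nz; auto. Qed.

Lemma term_expand m n : termW m n = csum (fun k => Xm m k * Yf k n)%C (S m).
Proof.
  unfold termW, hqW.
  assert (Hgen : forall k, (k <= m)%nat -> (k <= n)%nat ->
    ((qbW m k * qbW n k * RtoC (-1) ^ k * RtoC (q ^ binom2 k) * qp (RtoC q) k * (z1 ^ (m - k) * z2 ^ (n - k))) *
      (pp u a m * pp v b n / (qp (RtoC q) m * qp (RtoC q) n)))%C = (Xm m k * Yf k n)%C).
  { intros k Hkm Hkn. unfold Xm, Yf, w, qbW. rewrite <- !qq_qp. replace (k <=? n)%nat with true by (symmetry; apply Nat.leb_le; lia).
    pose proof (qq_nz q Hq m). pose proof (qq_nz q Hq n). pose proof (qq_nz q Hq k).
    pose proof (qq_nz q Hq (m - k)). pose proof (qq_nz q Hq (n - k)).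
    field. repeat split; auto. }
  rewrite Cmult_comm, <- csum_scal.
  destruct (Compare_dec.le_lt_dec m n) as [Hmn|Hmn].
  - replace (Nat.min m n) with m by lia. apply csum_ext. intros k Hk. rewrite Cmult_comm. apply Hgen; lia.
  - replace (Nat.min m n) with n by lia. replace (S m) with (S n + (m - n))%nat by lia.
    rewrite csum_split. rewrite (csum_zero (fun i => Xm m (S n + i) * Yf (S n + i) n)%C).
    2:{ intros i _. unfold Yf. replace (S n + i <=? n)%nat with false by (symmetry; apply Nat.leb_gt; lia). ring. }
    rewrite Cplus_0_r. apply csum_ext. intros k Hk. rewrite Cmult_comm. apply Hgen; lia.
Qed.

Lemma inner m : cv (csum (termW m)) (Tm m).
Proof.
  eapply cv_ext. intros N. symmetry. rewrite (csum_ext (termW m) (fun n => csum (fun k => Xm m k * Yf k n)%C (S m)) N).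
  2:{ intros; apply term_expand. }
  rewrite csum_exchange. reflexivity.
  unfold Tm. apply cv_csum_fin. intros k. eapply cv_ext. intros N. symmetry. apply csum_scal.
  apply cv_scal. apply Y_cv.
Qed.

Definition gam (k : nat) : C := (w k * pp u a k * (pp v b k * Fv k))%C.
Definition E (k j : nat) : C := term u (a * RtoC (q ^ k)) z1 j.

Lemma X_expand m k : (k <= m)%nat -> Xm m k = (w k * pp u a k * E k (m - k))%C.
Proof.
  intros Hk. assert (Hp : pp u a m = (pp u a k * pp u (a * RtoC (q ^ k)) (m - k))%C).
  { rewrite <- pp_split. f_equal. lia. }
  unfold Xm, E, W3.term, e. rewrite Hp. unfold Cdiv. ring.
Qed.

Lemma Tm_sum M : csum Tm M = csum (fun k => gam k * csum (E k) (M - k))%C M.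
Proof.
  unfold Tm.
  rewrite (csum_ext (fun m => csum (fun k => Xm m k * (pp v b k * Fv k))%C (S m))
                    (fun m => csum (fun k => gam k * E k (m - k)%nat)%C (S m)) M).
  2:{ intros m _. apply csum_ext. intros k Hk. rewrite X_expand by lia. unfold gam. ring. }
  etransitivity. apply (csum_triangle (fun k j => (gam k * E k j)%C) M).
  apply csum_ext. intros k _. apply csum_scal.
Qed.

Lemma Cmod_b_q (c : C) k : Cmod (c * RtoC (q ^ k)) <= Cmod c.
Proof. rewrite Cmod_mult, Cmod_RtoC_q by auto. pose proof (qpow_le1 q Hq k). pose proof (Cmod_ge_0 c).
  pose proof (qpow_pos q Hq k). nra. Qed.

Lemma Ebound : exists Tu, 0 <= Tu /\ forall k n, Cmod (csum (E k) n) <= Tu.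
Proof.
  destruct (tr_conv q Hq u a z1 Huz') as [Tu HT].
  assert (Hle : forall n, Rsum (tr u a z1) n <= Tu).
  { apply growing_ineq; auto. apply Rsum_growing. intros; apply tr_nonneg; auto. }
  exists Tu. split. pose proof (Hle O). simpl in H. lra.
  intros k n. eapply Rle_trans. apply Cmod_csum. eapply Rle_trans. 2: apply (Hle n).
  apply Rsum_le. intros j. apply term_bound; auto. apply Cmod_b_q.
Qed.

Lemma Fvbound : exists Tv, 0 <= Tv /\ forall k, Cmod (Fv k) <= Tv.
Proof.
  destruct (tr_conv q Hq v b z2 Hvz') as [Tv HT].
  assert (Hle : forall n, Rsum (tr v b z2) n <= Tv).
  { apply growing_ineq; auto. apply Rsum_growing. intros; apply tr_nonneg; auto. }
  exists Tv. split. pose proof (Hle O). simpl in H. lra.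
  intros k. replace (Fv k) with (Fv k - RtoC 0)%C by ring.
  apply (cv_le _ _ _ _ O (F_cv q Hq v (b * RtoC (q ^ k)) z2 Hvz')).
  intros n _. replace (csum (term v (b * RtoC (q ^ k)) z2) n - RtoC 0)%C with (csum (term v (b * RtoC (q ^ k)) z2) n) by ring.
  eapply Rle_trans. apply Cmod_csum. eapply Rle_trans. 2: apply (Hle n).
  apply Rsum_le. intros j. apply term_bound; auto. apply Cmod_b_q.
Qed.

Definition dd (k : nat) : R :=
  q ^ binom2 k * rp q (Cmod u) (Cmod a) k * rp q (Cmod v) (Cmod b) k / rq q k.

Lemma dd_nonneg k : 0 <= dd k.
Proof. unfold dd. pose proof (rq_pos q Hq k). pose proof (qpow_pos q Hq (binom2 k)).
  pose proof (rp_nonneg q Hq (Cmod u) (Cmod a) k (Cmod_ge_0 _) (Cmod_ge_0 _)).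
  pose proof (rp_nonneg q Hq (Cmod v) (Cmod b) k (Cmod_ge_0 _) (Cmod_ge_0 _)).
  apply Rmult_le_pos. apply Rmult_le_pos. apply Rmult_le_pos; lra. lra. apply Rlt_le, Rinv_0_lt_compat; auto. Qed.

Lemma dd_S k : dd (S k) = dd k * (q ^ k * (Cmod u + Cmod a * q ^ k) * (Cmod v + Cmod b * q ^ k) / (1 - q ^ S k)).
Proof.
  unfold dd. rewrite binom2_S, pow_add. simpl rp. simpl rq.
  pose proof (rq_pos q Hq k). pose proof (qpow_S_lt1 q Hq k). simpl pow in *. field. split; lra.
Qed.

Lemma dd_conv : exists Td, Un_cv (Rsum dd) Td.
Proof.
  set (U1 := Cmod u + Cmod a + 1). set (V1 := Cmod v + Cmod b + 1).
  pose proof (Cmod_ge_0 u). pose proof (Cmod_ge_0 a). pose proof (Cmod_ge_0 v). pose proof (Cmod_ge_0 b).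
  assert (HU : 1 <= U1) by (unfold U1; lra). assert (HV : 1 <= V1) by (unfold V1; lra).
  destruct (pow_lt_1_zero q ltac:(rewrite Rabs_right; lra) ((1 - q) / (2 * (U1 * V1)))) as [J HJ].
  { apply Rdiv_lt_0_compat. lra. nra. }
  apply (ratio_conv dd (1/2) J). apply dd_nonneg. lra.
  intros k Hk. rewrite dd_S. rewrite (Rmult_comm (dd k)). apply Rmult_le_compat_r. apply dd_nonneg.
  specialize (HJ k Hk). pose proof (qpow_pos q Hq k). pose proof (qpow_le1 q Hq k).
  rewrite Rabs_right in HJ by lra.
  pose proof (qpow_S_lt1 q Hq k).
  assert (Hs : 1 - q <= 1 - q ^ S k) by (simpl; nra).
  apply Rmult_le_reg_r with (1 - q ^ S k). lra. unfold Rdiv. rewrite Rmult_assoc, Rinv_l by lra.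
  assert (K5 : q ^ k * (U1 * V1) < (1 - q) / 2).
  { apply Rmult_lt_compat_r with (r := U1 * V1) in HJ; [|nra]. unfold Rdiv in HJ.
    rewrite Rinv_mult, Rmult_assoc, (Rmult_assoc (/2)), Rinv_l, Rmult_1_r in HJ by nra. lra. }
  assert (K6 : Cmod u + Cmod a * q ^ k <= U1) by (unfold U1; nra).
  assert (K7 : Cmod v + Cmod b * q ^ k <= V1) by (unfold V1; nra).
  assert (K8 : (Cmod u + Cmod a * q ^ k) * (Cmod v + Cmod b * q ^ k) <= U1 * V1).
  { apply Rmult_le_compat; nra. }
  assert (K9 : q ^ k * ((Cmod u + Cmod a * q ^ k) * (Cmod v + Cmod b * q ^ k)) <= q ^ k * (U1 * V1)).
  { apply Rmult_le_compat_l; lra. }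
  rewrite Rmult_1_r. rewrite Rmult_assoc. lra.
Qed.

Lemma Un_cv_ext' (s t : nat -> R) l : (forall n, s n = t n) -> Un_cv s l -> Un_cv t l.
Proof. intros E H eps He. destruct (H eps He) as [N HN]. exists N. intros n Hn. rewrite <- E. auto. Qed.

Lemma Cmod_m1pow k : Cmod (RtoC (-1) ^ k) = 1.
Proof. rewrite Cmod_pow, Cmod_R. replace (Rabs (-1)) with 1 by (rewrite Rabs_left; lra). apply pow1. Qed.

Lemma gam_bound Tv : 0 <= Tv -> (forall k, Cmod (Fv k) <= Tv) -> forall k, Cmod (gam k) <= Tv * dd k.
Proof.
  intros HTv HF k. unfold gam, w, dd.
  rewrite !Cmod_mult, Cmod_div by (apply qq_nz; auto). rewrite Cmod_mult, Cmod_m1pow, Cmod_RtoC_q, Cmod_qq by auto.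
  pose proof (pp_bound q Hq u a a k (Rle_refl _)). pose proof (pp_bound q Hq v b b k (Rle_refl _)).
  pose proof (HF k). pose proof (Cmod_ge_0 (pp u a k)). pose proof (Cmod_ge_0 (pp v b k)). pose proof (Cmod_ge_0 (Fv k)).
  pose proof (rq_pos q Hq k). pose proof (qpow_pos q Hq (binom2 k)).
  set (x := q ^ binom2 k / rq q k).
  assert (Hx : 0 <= x) by (unfold x; apply Rlt_le, Rdiv_lt_0_compat; auto).
  replace (Tv * (q ^ binom2 k * rp q (Cmod u) (Cmod a) k * rp q (Cmod v) (Cmod b) k / rq q k))
    with (x * rp q (Cmod u) (Cmod a) k * (rp q (Cmod v) (Cmod b) k * Tv)) by (unfold x, Rdiv; ring).
  rewrite Rmult_1_l. fold x.
  apply Rmult_le_compat. apply Rmult_le_pos; auto. apply Rmult_le_pos; auto.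
  apply Rmult_le_compat_l; auto. apply Rmult_le_compat; auto.
Qed.

Lemma outer : exists L, cv (csum (fun k => gam k * Fu k)%C) L /\ cv (csum Tm) L.
Proof.
  destruct Ebound as [Tu [HTu HE]]. destruct Fvbound as [Tv [HTv HF]]. destruct dd_conv as [Td HTd].
  destruct (tannery (fun M k => gam k * csum (E k) (M - k))%C (fun k => gam k * Fu k)%C
                    (fun k => Tu * (Tv * dd k)) (Tu * (Tv * Td))) as [L [HL1 HL2]].
  - intros k. apply (cv_shift _ _ k). eapply cv_ext. 2: apply cv_scal; apply (F_cv q Hq u (a * RtoC (q ^ k)) z1 Huz').
    intros N. simpl. replace (k + N - k)%nat with N by lia. reflexivity.
  - intros M k. rewrite Cmod_mult. pose proof (gam_bound Tv HTv HF k). pose proof (HE k (M - k)%nat).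
    pose proof (Cmod_ge_0 (gam k)). pose proof (Cmod_ge_0 (csum (E k) (M - k))).
    rewrite Rmult_comm. apply Rmult_le_compat; auto.
  - eapply Un_cv_ext'. 2: apply Un_cv_scal; apply Un_cv_scal; exact HTd.
    intros n. rewrite Rsum_scal, Rsum_scal. reflexivity.
  - exists L. split; auto. eapply cv_ext. 2: exact HL2. intros M. symmetry. apply Tm_sum.
Qed.

Definition sW (k : nat) : C :=
  (pp u a k * pp v b k / (qp (RtoC q) k * qp (a * z1) k * qp (b * z2) k) * RtoC (-1) ^ k * RtoC (q ^ binom2 k))%C.

Lemma main_W : exists P Q S T,
  cv (fun n => qp (a * z1) n * qp (b * z2) n)%C P /\
  cv (fun n => qp (u * z1) n * qp (v * z2) n)%C Q /\
  cv (csum sW) S /\ (forall m, cv (csum (termW m)) (T m)) /\ cv (csum T) (P / Q * S)%C.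
Proof.
  destruct outer as [L [HL1 HL2]].
  set (P := (qinf (a * z1) * qinf (b * z2))%C). set (Q := (qinf (u * z1) * qinf (v * z2))%C).
  set (K := (P / Q)%C).
  assert (Hqa : forall k, qp (a * z1) k <> RtoC 0) by (intros k; apply cprod_nz; intros i _; apply Ha).
  assert (Hqb : forall k, qp (b * z2) k <> RtoC 0) by (intros k; apply cprod_nz; intros i _; apply Hb).
  assert (Hiu : qinf (u * z1) <> RtoC 0) by (apply qinf_nz_small; auto).
  assert (Hiv : qinf (v * z2) <> RtoC 0) by (apply qinf_nz_small; auto).
  assert (Hia : qinf (a * z1) <> RtoC 0) by (apply qinf_nz; auto).
  assert (Hib : qinf (b * z2) <> RtoC 0) by (apply qinf_nz; auto).
  assert (HQ : Q <> RtoC 0) by (apply Cmult_neq_0; auto).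
  assert (HP : P <> RtoC 0) by (apply Cmult_neq_0; auto).
  assert (HK : K <> RtoC 0).
  { intro E0. apply HP. replace P with (K * Q)%C by (unfold K; field; auto). rewrite E0; ring. }
  assert (Hid : forall k, (gam k * Fu k)%C = (K * sW k)%C).
  { intros k. unfold gam, Fu, Fv, sW, w, K, P, Q. rewrite <- qq_qp.
    rewrite (QB_eval q Hq u (a * RtoC (q ^ k)) z1 Huz').
    rewrite (QB_eval q Hq v (b * RtoC (q ^ k)) z2 Hvz').
    rewrite (qinf_shift q Hq (a * z1) k). rewrite (qinf_shift q Hq (b * z2) k).
    replace (a * RtoC (q ^ k) * z1)%C with (a * z1 * RtoC (q ^ k))%C by ring.
    replace (b * RtoC (q ^ k) * z2)%C with (b * z2 * RtoC (q ^ k))%C by ring.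
    pose proof (qq_nz q Hq k). pose proof (Hqa k). pose proof (Hqb k).
    field. repeat split; auto. }
  exists P, Q, (/ K * L)%C, Tm. split; [|split; [|split; [|split]]].
  - apply cv_mult; apply qinf_cv; auto.
  - apply cv_mult; apply qinf_cv; auto.
  - apply (cv_ext (fun n => / K * csum (fun k => gam k * Fu k) n)%C).
    intros n. rewrite <- csum_scal. apply csum_ext. intros k _. rewrite Hid. field. auto.
    apply cv_scal. auto.
  - intros m. apply inner.
  - replace (P / Q * (/ K * L))%C with L. auto. unfold K. field. split; auto.
Qed.

End Main.
End W6.

Module W7.
Import Coquelicot.Coquelicot.
Import W W2 W3 W4 W5 W6.

Lemma hyp_conv (x : C) (q : R) : (forall k : nat, Cmul x (Defs.RtoC (q ^ k)) <> Cone) ->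
  forall k, (RtoC 1 - x * RtoC (q ^ k))%C <> RtoC 0.
Proof.
  intros H k E. apply (H k). change (x * RtoC (q ^ k) = RtoC 1)%C.
  replace (x * RtoC (q ^ k))%C with (RtoC 1 - (RtoC 1 - x * RtoC (q ^ k)))%C by ring. rewrite E. ring.
Qed.

Lemma qpoch_qp (x : C) (q : R) n : qpoch x q n = qp q x n.
Proof. unfold qpoch, qp. etransitivity. apply Cprod_cprod. apply cprod_ext. intros. reflexivity. Qed.
Lemma Cpow_eq (x : C) n : Defs.Cpow x n = (x ^ n)%C.
Proof. induction n. reflexivity. simpl. rewrite IHn. reflexivity. Qed.

Lemma Hq_hqW (q : R) (z1 z2 : C) m n : Defs.Hq m n z1 z2 q = hqW q z1 z2 m n.
Proof.
  unfold Defs.Hq, hqW. etransitivity. apply Csum_csum. apply csum_ext. intros k _.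
  unfold qbW, qbinom. rewrite !qpoch_qp, !Cpow_eq. reflexivity.
Qed.

End W7.

Theorem theorem3p4 :
  forall (q : R) (a b u v z1 z2 : Cx),
    0 < q < 1 ->
    Cmod (Cmul u z1) < 1 ->
    Cmod (Cmul v z2) < 1 ->
    (forall k : nat, Cmul (Cmul a z1) (RtoC (q ^ k)) <> Cone) ->
    (forall k : nat, Cmul (Cmul b z2) (RtoC (q ^ k)) <> Cone) ->
    exists P Q S : Cx,
      (* P = (a z1, b z2; q)_oo *)
      Cseq_cv (fun n => Cmul (qpoch (Cmul a z1) q n) (qpoch (Cmul b z2) q n)) P /\
      (* Q = (u z1, v z2; q)_oo *)
      Cseq_cv (fun n => Cmul (qpoch (Cmul u z1) q n) (qpoch (Cmul v z2) q n)) Q /\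
      (* S = the 2phi2 series on the right-hand side *)
      Cseries_cv
        (fun k =>
           Cmul (Cmul
             (Cdiv (Cprod (fun i => Cmul (Csub u (Cmul a (RtoC (q ^ i))))
                                         (Csub v (Cmul b (RtoC (q ^ i))))) k)
                   (Cmul (Cmul (qpoch (RtoC q) q k) (qpoch (Cmul a z1) q k))
                         (qpoch (Cmul b z2) q k)))
             (Cpow (RtoC (-1)) k))
             (RtoC (q ^ binom2 k)))
        S /\
      (* the double series on the left, summed as sum_m (sum_n ...), equals P/Q * S *)
      exists T : nat -> Cx,
        (forall m : nat,
           Cseries_cv
             (fun n =>
                Cmul (Hq m n z1 z2 q)
                  (Cdiv (Cmul (Cprod (fun i => Csub u (Cmul a (RtoC (q ^ i)))) m)
                              (Cprod (fun i => Csub v (Cmul b (RtoC (q ^ i)))) n))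
                        (Cmul (qpoch (RtoC q) q m) (qpoch (RtoC q) q n))))
             (T m)) /\
        Cseries_cv T (Cmul (Cdiv P Q) S).
Proof.
  intros q a b u v z1 z2 Hq Hu Hv Ha Hb.
  destruct (W6.main_W q Hq a b u v z1 z2 Hu Hv (W7.hyp_conv _ q Ha) (W7.hyp_conv _ q Hb))
    as [P [Q [S [T [H1 [H2 [H3 [H4 H5]]]]]]]].
  exists P, Q, S. split; [|split; [|split]].
  - apply (proj2 (W.cv_iff _ _)). exact H1.
  - apply (proj2 (W.cv_iff _ _)). exact H2.
  - unfold Cseries_cv. apply (proj2 (W.cv_iff _ _)). eapply W.cv_ext. 2: exact H3.
    intros N. etransitivity; [|symmetry; apply W.Csum_csum]. apply W2.csum_ext. intros k _. unfold W6.sW.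
    unfold W3.pp. rewrite <- W2.cprod_mult. rewrite ?W7.qpoch_qp. reflexivity.
  - exists T. split.
    + intros m. unfold Cseries_cv. apply (proj2 (W.cv_iff _ _)). eapply W.cv_ext. 2: exact (H4 m).
      intros N. etransitivity; [|symmetry; apply W.Csum_csum]. apply W2.csum_ext. intros n _.
      unfold W6.termW. rewrite W7.Hq_hqW, ?W7.qpoch_qp. reflexivity.
    + unfold Cseries_cv. apply (proj2 (W.cv_iff _ _)). eapply W.cv_ext. 2: exact H5.
      intros N. symmetry. apply W.Csum_csum.
Qed.
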